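(* Let $D>0$, $n\ge1$, and let $V:S^1\to\mathbb R$ be continuous, odd and $\tfrac1n$-periodic. Then every nonnegative ($\mathcal C^2$) stationary solution $f$ of (TP) with $\int_{S^1}f=1$ is $\tfrac1n$-periodic.
   Context: $S^1=\mathbb R/\mathbb Z$; $(V*f)(\theta)=\int_{S^1}V(\theta-\psi)f(\psi)d\psi$. Equation (TP): $\partial_tf=D\partial_\theta^2f+\partial_\theta((V*f)f)$; a stationary solution is a time-independent solution. *)

(* Defs.v *)
From Stdlib Require Import Reals ClassicalEpsilon.
Open Scope R_scope.

(* Functions on S^1 = R/Z are represented as 1-periodic functions R -> R. *)
Definition periodic_with (p : R) (g : R -> R) : Prop :=
  forall x : R, g (x + p) = g x.

Definition on_circle (g : R -> R) : Prop := periodic_with 1 g.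

Definition IsInt (F : R -> R) (a b I : R) : Prop :=
  exists pr : Riemann_integrable F a b, RiemannInt pr = I.

(* Riemann integral over [a,b] (an arbitrary value if F is not integrable). *)
Definition Rint (F : R -> R) (a b : R) : R :=
  epsilon (inhabits 0) (fun I => IsInt F a b I).

(* (V * f)(theta) = int_{S^1} V(theta - psi) f(psi) dpsi, S^1 = [0,1). *)
Definition conv (V f : R -> R) (theta : R) : R :=
  Rint (fun psi => V (theta - psi) * f psi) 0 1.

Definition C2_with (f f1 f2 : R -> R) : Prop :=
  (forall x, derivable_pt_lim f x (f1 x)) /\
  (forall x, derivable_pt_lim f1 x (f2 x)) /\
  continuity f2.

(* f is a C^2 stationary solution of (TP):
   0 = D f'' + d/dtheta ((V*f) f). *)
Definition stationary_TP (D : R) (V f : R -> R) : Prop :=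
  exists f1 f2 h : R -> R,
    C2_with f f1 f2 /\
    (forall x, derivable_pt_lim (fun t => conv V f t * f t) x (h x)) /\
    (forall x, D * f2 x + h x = 0).

(* Main.v *)
Require Import Defs.
From Stdlib Require Import Reals Lra ClassicalEpsilon FunctionalExtensionality Classical.
From Stdlib Require Import Lia.

Lemma der_ext (f g : R -> R) x l : (forall y, f y = g y) -> derivable_pt_lim f x l -> derivable_pt_lim g x l.
Proof. intros H D. replace g with f; [exact D|]. extensionality y; auto. Qed.

Lemma der_shift (f f1 : R -> R) c x : (forall y, derivable_pt_lim f y (f1 y)) ->
  derivable_pt_lim (fun y => f (y + c)) x (f1 (x + c)).
Proof.
  intros H.
  assert (A : derivable_pt_lim (fun y => y + c) x 1).
  { pose proof (derivable_pt_lim_plus id (fct_cte c) x 1 0 (derivable_pt_lim_id x) (derivable_pt_lim_const c x)) as P.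
    replace 1 with (1 + 0) by ring. exact P. }
  pose proof (derivable_pt_lim_comp _ f x 1 (f1 (x + c)) A (H _)) as P.
  replace (f1 (x + c)) with (f1 (x + c) * 1) by ring. exact P.
Qed.

Lemma der_expK (K x : R) : derivable_pt_lim (fun y => exp (K * y)) x (K * exp (K * x)).
Proof.
  assert (A : derivable_pt_lim (fun y => K * y) x K).
  { pose proof (derivable_pt_lim_scal id K x 1 (derivable_pt_lim_id x)) as P.
    rewrite Rmult_1_r in P. exact P. }
  pose proof (derivable_pt_lim_comp _ exp x K _ A (derivable_pt_lim_exp _)) as P.
  rewrite Rmult_comm. exact P.
Qed.

Lemma abs_le_betw a b : Rabs a <= b -> - b <= a <= b.
Proof. intro H. unfold Rabs in H; destruct (Rcase_abs a); lra. Qed.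

Lemma gron (u u' : R -> R) (K a b t0 : R) :
  (forall x, derivable_pt_lim u x (u' x)) ->
  (forall x, a <= x <= b -> Rabs (u' x) <= K * Rabs (u x)) ->
  a <= t0 <= b -> u t0 = 0 -> forall x, a <= x <= b -> u x = 0.
Proof.
  intros Hd Hb Ht Hz x Hx.
  set (L := 2 * K).
  assert (Hq : forall y, derivable_pt_lim (fun y => u y * u y) y (2 * u y * u' y)).
  { intro y. pose proof (derivable_pt_lim_mult u u y _ _ (Hd y) (Hd y)) as P.
    replace (2 * u y * u' y) with (u' y * u y + u y * u' y) by ring. exact P. }
  assert (Hqb : forall y, a <= y <= b -> Rabs (2 * u y * u' y) <= L * (u y * u y)).
  { intros y Hy. specialize (Hb y Hy). unfold L.
    rewrite !Rabs_mult. rewrite (Rabs_right 2) by lra.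
    assert (0 <= Rabs (u y)) by apply Rabs_pos.
    replace (u y * u y) with (Rabs (u y) * Rabs (u y)).
    2:{ rewrite <- Rabs_mult. apply Rabs_right. nra. }
    nra. }
  assert (Hsq : u x * u x <= 0 -> u x = 0) by (intro; nra).
  apply Hsq.
  destruct (Rtotal_order x t0) as [Hlt | [Heq | Hgt]].
  - (* s = q * exp(L y) nondecreasing *)
    set (s := fun y => (u y * u y) * exp (L * y)).
    assert (Hs : forall y, derivable_pt_lim s y ((2 * u y * u' y) * exp (L * y) + (u y * u y) * (L * exp (L * y)))).
    { intro y. exact (derivable_pt_lim_mult (fun y => u y * u y) (fun y => exp (L * y)) y _ _ (Hq y) (der_expK L y)). }
    destruct (MVT_cor2 s _ x t0 Hlt (fun c _ => Hs c)) as [c [Hc1 Hc2]].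
    assert (Hcab : a <= c <= b) by lra.
    pose proof (Hqb c Hcab) as Q. apply abs_le_betw in Q.
    pose proof (exp_pos (L * c)). pose proof (exp_pos (L * x)).
    unfold s in Hc1. rewrite Hz in Hc1.
    assert (0 <= (2 * u c * u' c) * exp (L * c) + (u c * u c) * (L * exp (L * c))) by nra.
    assert (u x * u x * exp (L * x) <= 0) by nra. nra.
  - subst. rewrite Hz. lra.
  - set (s := fun y => (u y * u y) * exp ((- L) * y)).
    assert (Hs : forall y, derivable_pt_lim s y ((2 * u y * u' y) * exp ((- L) * y) + (u y * u y) * ((- L) * exp ((- L) * y)))).
    { intro y. exact (derivable_pt_lim_mult (fun y => u y * u y) (fun y => exp ((- L) * y)) y _ _ (Hq y) (der_expK (- L) y)). }
    destruct (MVT_cor2 s _ t0 x Hgt (fun c _ => Hs c)) as [c [Hc1 Hc2]].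
    assert (Hcab : a <= c <= b) by lra.
    pose proof (Hqb c Hcab) as Q. apply abs_le_betw in Q.
    pose proof (exp_pos ((- L) * c)). pose proof (exp_pos ((- L) * x)).
    unfold s in Hc1. rewrite Hz in Hc1.
    assert ((2 * u c * u' c) * exp ((- L) * c) + (u c * u c) * ((- L) * exp ((- L) * c)) <= 0) by nra.
    assert (u x * u x * exp ((- L) * x) <= 0) by nra. nra.
Qed.

Lemma cont_of_der (f f1 : R -> R) : (forall x, derivable_pt_lim f x (f1 x)) -> continuity f.
Proof. intros H x. apply derivable_continuous_pt. exists (f1 x). exact (H x). Qed.

Lemma cont_integrand (V f : R -> R) th : continuity V -> continuity f ->
  continuity (fun psi => V (th - psi) * f psi).
Proof.
  intros HV Hf x.
  change (continuity_pt (mult_fct (comp V (fun psi => Rminus th psi)) f) x).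
  apply continuity_pt_mult; [|apply Hf].
  apply continuity_pt_comp; [|apply HV].
  change (continuity_pt (minus_fct (fct_cte th) id) x).
  apply continuity_pt_minus.
  - apply continuity_pt_const. intros a b; reflexivity.
  - apply derivable_continuous_pt, derivable_pt_id.
Qed.

Lemma bound_cont (g : R -> R) a b : a <= b -> continuity g ->
  exists M, 0 <= M /\ forall x, a <= x <= b -> Rabs (g x) <= M.
Proof.
  intros Hab Hg.
  destruct (continuity_ab_maj (fun x => Rabs (g x)) a b Hab) as [m [Hm _]].
  { intros c _. change (continuity_pt (comp Rabs g) c).
    apply continuity_pt_comp; [apply Hg | apply Rcontinuity_abs]. }
  exists (Rabs (g m)). split; [apply Rabs_pos | exact Hm].
Qed.

Lemma conv_bound (V f : R -> R) a b : a <= b -> continuity V -> continuity f ->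
  exists M, forall th, a <= th <= b -> Rabs (conv V f th) <= M.
Proof.
  intros Hab HV Hf.
  destruct (bound_cont V (a - 1) b ltac:(lra) HV) as [MV [HMV HV']].
  destruct (bound_cont f 0 1 ltac:(lra) Hf) as [Mf [HMf Hf']].
  exists (MV * Mf). intros th Hth.
  assert (Hi : IsInt (fun psi => V (th - psi) * f psi) 0 1 (conv V f th)).
  { unfold conv, Rint. apply epsilon_spec.
    assert (pr : Riemann_integrable (fun psi => V (th - psi) * f psi) 0 1).
    { apply continuity_implies_RiemannInt; [lra|]. intros; apply cont_integrand; auto. }
    exists (RiemannInt pr), pr. reflexivity. }
  destruct Hi as [pr Hpr]. rewrite <- Hpr.
  assert (Hpt : forall x, 0 < x < 1 -> Rabs (V (th - x) * f x) <= MV * Mf).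
  { intros x Hx. rewrite Rabs_mult.
    apply Rmult_le_compat; try apply Rabs_pos.
    - apply HV'; lra.
    - apply Hf'; lra. }
  assert (pc : forall c, Riemann_integrable (fct_cte c) 0 1).
  { intro c. apply continuity_implies_RiemannInt; [lra|]. intros; apply continuity_pt_const. intros u v; reflexivity. }
  pose proof (RiemannInt_P19 pr (pc (MV * Mf)) ltac:(lra)) as U.
  pose proof (RiemannInt_P19 (pc (- (MV * Mf))) pr ltac:(lra)) as L.
  rewrite !RiemannInt_P15 in U, L.
  apply Rabs_le. split.
  - assert (- (MV * Mf) <= RiemannInt pr) by (apply Rle_trans with (- (MV * Mf) * (1 - 0)); [lra|]; apply L; intros x Hx; unfold fct_cte; specialize (Hpt x Hx); unfold Rabs in Hpt; destruct Rcase_abs; lra). lra.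
  - assert (RiemannInt pr <= MV * Mf * (1 - 0)) by (apply U; intros x Hx; unfold fct_cte; specialize (Hpt x Hx); unfold Rabs in Hpt; destruct Rcase_abs; lra). lra.
Qed.

Theorem mainTheorem11 (D : R) (n : nat) (V f : R -> R) :
  0 < D -> (1 <= n)%nat ->
  on_circle V -> continuity V -> (forall x, V (- x) = - V x) ->
  periodic_with (/ INR n) V ->
  on_circle f -> (forall x, 0 <= f x) ->
  stationary_TP D V f ->
  IsInt f 0 1 1 ->
  periodic_with (/ INR n) f.
Proof.
  intros HD Hn HV1 HVc Hodd HVn Hf1 Hpos [f1 [f2 [h [[Hd1 [Hd2 Hc2]] [Hh Heq]]]]] Hint.
  set (c := / INR n).
  assert (HnR : 0 < INR n) by (apply lt_0_INR; lia).
  set (W := conv V f).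
  assert (HW : forall x, W (x + c) = W x).
  { intro x. unfold W, conv. f_equal. extensionality psi.
    replace (x + c - psi) with ((x - psi) + c) by ring. unfold c; rewrite HVn; reflexivity. }
  assert (Hfc : continuity f) by exact (cont_of_der f f1 Hd1).
  assert (HF : forall x, derivable_pt_lim (fun t => D * f1 t + W t * f t) x (D * f2 x + h x)).
  { intro x. pose proof (derivable_pt_lim_scal f1 D x _ (Hd2 x)) as P1.
    pose proof (derivable_pt_lim_plus _ _ x _ _ P1 (Hh x)) as P. exact P. }
  assert (Hcst : forall x y, x < y -> D * f1 x + W x * f x = D * f1 y + W y * f y).
  { intros x y Hxy. destruct (MVT_cor2 _ _ x y Hxy (fun c _ => HF c)) as [z [Hz _]].
    rewrite Heq in Hz. lra. }
  set (u := fun x => f (x + c) - f x).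
  set (u' := fun x => f1 (x + c) - f1 x).
  assert (Hud : forall x, derivable_pt_lim u x (u' x)).
  { intro x. exact (derivable_pt_lim_minus _ _ x _ _ (der_shift f f1 c x Hd1) (Hd1 x)). }
  assert (Hu' : forall x, D * u' x = - W x * u x).
  { intro x. assert (Hxc : x < x + c) by (unfold c; pose proof (Rinv_0_lt_compat _ HnR); lra).
    pose proof (Hcst _ _ Hxc) as E. rewrite HW in E. unfold u, u'. lra. }
  assert (Huc : continuity u) by exact (cont_of_der u u' Hud).
  assert (Hzero : exists t0, u t0 = 0).
  { apply NNPP. intro Hne.
    assert (Hne' : forall x, u x <> 0) by (intros x Hx; apply Hne; exists x; exact Hx).
    assert (Hsg : forall x, 0 < u 0 * u x).
    { intro x. destruct (Rlt_le_dec 0 (u 0 * u x)) as [|Hle]; [assumption|exfalso].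
      destruct (Rle_dec 0 x) as [H0x|Hx0].
      - destruct (IVT_cor u 0 x Huc H0x Hle) as [z [_ Hz]]. exact (Hne' z Hz).
      - destruct (IVT_cor u x 0 Huc ltac:(lra) ltac:(rewrite Rmult_comm; exact Hle)) as [z [_ Hz]].
        exact (Hne' z Hz). }
    assert (Hind : forall k, 0 < u 0 * (f (INR (S k) * c) - f 0)).
    { induction k.
      - replace (INR 1 * c) with (0 + c) by (simpl; ring).
        pose proof (Hsg 0). unfold u in *. exact H.
      - replace (INR (S (S k)) * c) with (INR (S k) * c + c) by (rewrite (S_INR (S k)); ring).
        pose proof (Hsg (INR (S k) * c)). unfold u in *.
        replace (f (INR (S k) * c + c) - f 0) with ((f (INR (S k) * c + c) - f (INR (S k) * c)) + (f (INR (S k) * c) - f 0)) by ring.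
        nra. }
    specialize (Hind (n - 1)%nat).
    replace (S (n - 1)) with n in Hind by lia.
    replace (INR n * c) with (0 + 1) in Hind by (unfold c; field; lra).
    rewrite Hf1 in Hind. lra. }
  destruct Hzero as [t0 Ht0].
  intro x.
  destruct (conv_bound V f (Rmin t0 x) (Rmax t0 x) ltac:(apply Rle_trans with t0; [apply Rmin_l|apply Rmax_l]) HVc Hfc) as [M HM].
  assert (Hux : u x = 0).
  { apply (gron u u' (M / D) (Rmin t0 x) (Rmax t0 x) t0 Hud).
    - intros y Hy. specialize (HM y Hy). fold W in HM.
      assert (E : u' y = - W y * u y / D) by (rewrite <- Hu'; field; lra).
      rewrite E. unfold Rdiv. rewrite !Rabs_mult. rewrite Rabs_Ropp.
      rewrite (Rabs_right (/ D)) by (apply Rle_ge; apply Rlt_le, Rinv_0_lt_compat; lra).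
      pose proof (Rabs_pos (u y)). pose proof (Rinv_0_lt_compat _ HD).
      replace (M * / D * Rabs (u y)) with (M * Rabs (u y) * / D) by ring.
      apply Rmult_le_compat_r; [lra|]. apply Rmult_le_compat_r; [lra|exact HM].
    - split; [apply Rmin_l|apply Rmax_l].
    - exact Ht0.
    - split; [apply Rmin_r|apply Rmax_r]. }
  unfold u in Hux. fold c. lra.
Qed.
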